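(* Let $\beta\in(3/2,\beta^*]$, let $\vec z\in S_\beta$ and let $\vec z=\sum_{i=1}^\infty a_i\beta^{-i}$ with $a_i\in\{\vec q_0,\vec q_1,\vec q_2\}$. Then: (i) if $\vec z\in E_i$ for some $i\in\{0,1,2\}$, then $a_1=\vec q_i$; (ii) if $\vec z\in C_{ij}$ for some $ij\in\{01,12,02\}$, then $a_1\in\{\vec q_i,\vec q_j\}$.
   Context: $\beta^*\approx1.5437$ is the real root of $x^3-2x^2+2x=2$. $\vec q_0=(0,0)$, $\vec q_1=(1,0)$, $\vec q_2=(0,1)$, $f_{\vec q_i}(\vec z)=(\vec z+\vec q_i)/\beta$ (write $f_i=f_{\vec q_i}$), $S_\beta$ the attractor of this IFS. $H=\{(x,y):x<\frac1\beta,\ y<\frac1\beta,\ x+y>\frac{1}{\beta(\beta-1)}\}$. Define $\tilde E_0=([0,\frac1\beta)\times[0,\frac1\beta))\setminus H$; $\tilde E_1=\{0\le y<\frac1\beta,\ \frac{1}{\beta(\beta-1)}<x+y\le\frac1{\beta-1}\}\setminus H$; $\tilde E_2=\{0\le x<\frac1\beta,\ \frac{1}{\beta(\beta-1)}<x+y\le\frac1{\beta-1}\}\setminus H$; $\tilde C_{01}=\{x\ge\frac1\beta,\ y\ge0,\ x+y\le\frac{1}{\beta(\beta-1)}\}$; $\tilde C_{12}=\{x\ge\frac1\beta,\ y\ge\frac1\beta,\ x+y\le\frac1{\beta-1}\}$; $\tilde C_{02}=\{x\ge0,\ y\ge\frac1\beta,\ x+y\le\frac{1}{\beta(\beta-1)}\}$.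 For $\{i,j,k\}=\{0,1,2\}$ let $E_i=\bigl(\tilde E_i\cup\bigcup_{n\ge1}f_jf_i^n(H)\cup\bigcup_{n\ge1}f_kf_i^n(H)\bigr)\setminus\bigcup_{n\ge0}f_i^n(H)$, and for $ij\in\{01,12,02\}$ let $C_{ij}=\tilde C_{ij}\setminus\bigl(\bigcup_{n\ge1}f_if_j^n(H)\cup\bigcup_{n\ge1}f_jf_i^n(H)\bigr)$. *)

(* Defs.v *)
From Stdlib Require Import Reals Lra.
Open Scope R_scope.

(* Digits: D0, D1, D2 stand for q_0 = (0,0), q_1 = (1,0), q_2 = (0,1). *)
Inductive digit : Set := D0 | D1 | D2.

Definition qx (d : digit) : R := match d with D1 => 1 | _ => 0 end.
Definition qy (d : digit) : R := match d with D2 => 1 | _ => 0 end.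

Definition f (beta : R) (d : digit) (p : R * R) : R * R :=
  ((fst p + qx d) / beta, (snd p + qy d) / beta).

(* a : nat -> digit codes the sequence a_1, a_2, ... as a 0, a 1, ...;
   z = sum_{i>=1} a_i beta^{-i}, coordinatewise. *)
Definition expansion (beta : R) (a : nat -> digit) (z : R * R) : Prop :=
  infinite_sum (fun n => qx (a n) / beta ^ (S n)) (fst z) /\
  infinite_sum (fun n => qy (a n) / beta ^ (S n)) (snd z).

Definition S_beta (beta : R) (z : R * R) : Prop := exists a, expansion beta a z.

Definition H (beta : R) (p : R * R) : Prop :=
  fst p < 1 / beta /\ snd p < 1 / beta /\
  fst p + snd p > 1 / (beta * (beta - 1)).

Definition Etilde (beta : R) (i : digit) (p : R * R) : Prop :=
  let x := fst p in let y := snd p in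
  (match i with
   | D0 => 0 <= x < 1 / beta /\ 0 <= y < 1 / beta
   | D1 => 0 <= y < 1 / beta /\
           1 / (beta * (beta - 1)) < x + y <= 1 / (beta - 1)
   | D2 => 0 <= x < 1 / beta /\
           1 / (beta * (beta - 1)) < x + y <= 1 / (beta - 1)
   end) /\ ~ H beta p.

Definition in_fj_fin_H (beta : R) (j i : digit) (n : nat) (z : R * R) : Prop :=
  exists w, H beta w /\ z = f beta j (Nat.iter n (f beta i) w).

Definition E (beta : R) (i : digit) (z : R * R) : Prop :=
  (Etilde beta i z \/
   exists j n, j <> i /\ (1 <= n)%nat /\ in_fj_fin_H beta j i n z) /\
  ~ (exists n w, H beta w /\ z = Nat.iter n (f beta i) w).

Inductive dpair : Set := P01 | P12 | P02.
Definition pfst (p : dpair) : digit := match p with P01 => D0 | P12 => D1 | P02 => D0 end.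
Definition psnd (p : dpair) : digit := match p with P01 => D1 | P12 => D2 | P02 => D2 end.

Definition Ctilde (beta : R) (p : dpair) (z : R * R) : Prop :=
  let x := fst z in let y := snd z in
  match p with
  | P01 => x >= 1 / beta /\ y >= 0 /\ x + y <= 1 / (beta * (beta - 1))
  | P12 => x >= 1 / beta /\ y >= 1 / beta /\ x + y <= 1 / (beta - 1)
  | P02 => x >= 0 /\ y >= 1 / beta /\ x + y <= 1 / (beta * (beta - 1))
  end.

Definition Cij (beta : R) (p : dpair) (z : R * R) : Prop :=
  Ctilde beta p z /\
  ~ (exists n, (1 <= n)%nat /\
       (in_fj_fin_H beta (pfst p) (psnd p) n z \/
        in_fj_fin_H beta (psnd p) (pfst p) n z)).

(* Main.v *)
Require Import Defs.
From Stdlib Require Import Reals.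
Open Scope R_scope.
From Stdlib Require Import Reals Lra Psatz.
From Coquelicot Require Import Coquelicot.
Open Scope R_scope.

Lemma geom_b (b : R) : 1 < b -> is_series (fun n => 1 / b ^ (S n)) (1 / (b - 1)).
Proof.
  intros Hb.
  assert (H1 : Rabs (/ b) < 1).
  { rewrite Rabs_pos_eq. rewrite <- Rinv_1; apply Rinv_lt_contravar; lra. left; apply Rinv_0_lt_compat; lra. }
  pose proof (is_series_scal_l (/ b) _ _ (is_series_geom _ H1)) as G.
  replace (1 / (b - 1)) with (/ b * / (1 - / b)).
  2:{ replace (1 - / b) with ((b - 1) / b) by (field; lra). field; lra. }
  apply is_series_ext with (2 := G). intro n.
  unfold scal; simpl; unfold mult; simpl. rewrite pow_inv. field; repeat split; try lra; apply pow_nonzero; lra.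
Qed.

Lemma series_bound (b : R) (u : nat -> R) (l : R) : 1 < b ->
  (forall n, 0 <= u n <= 1 / b ^ (S n)) -> is_series u l -> 0 <= l <= 1 / (b - 1).
Proof.
  intros Hb Hu Hs.
  pose proof (is_series_unique _ _ Hs) as E1.
  pose proof (is_series_unique _ _ (geom_b b Hb)) as E2.
  split.
  - rewrite <- E1. 
    assert (Series (fun _ => 0) <= Series u).
    { apply Series_le. intro n; split; [lra| apply Hu]. exists l; exact Hs. }
    assert (Z : is_series (fun _ : nat => 0) 0).
    { pose proof (is_series_scal_l 0 _ _ Hs) as Z. unfold scal in Z; simpl in Z; unfold mult in Z; simpl in Z.
      rewrite Rmult_0_l in Z. apply is_series_ext with (2 := Z). intro; simpl; ring. }
    rewrite (is_series_unique _ _ Z) in H; lra.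
  - rewrite <- E1, <- E2. apply Series_le. exact Hu. exists (1/(b-1)); apply geom_b; lra.
Qed.

Lemma term_bound (b : R) (q : R) (n : nat) : 1 < b -> 0 <= q <= 1 ->
  0 <= q / b ^ (S n) <= 1 / b ^ (S n).
Proof.
  intros Hb Hq. assert (0 < b ^ S n) by (apply pow_lt; lra).
  unfold Rdiv. split. apply Rmult_le_pos; [lra| left; apply Rinv_0_lt_compat; lra].
  apply Rmult_le_compat_r; [left; apply Rinv_0_lt_compat; lra| lra].
Qed.

Lemma exp_T b a z : 1 < b -> expansion b a z ->
  0 <= fst z /\ 0 <= snd z /\ fst z + snd z <= 1 / (b - 1).
Proof.
  intros Hb [Hx Hy]. apply is_series_Reals in Hx. apply is_series_Reals in Hy.
  split; [|split].
  - apply (series_bound b _ _ Hb) in Hx. lra. intro n; apply term_bound; try lra.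
    destruct (a n); simpl; lra.
  - apply (series_bound b _ _ Hb) in Hy. lra. intro n; apply term_bound; try lra.
    destruct (a n); simpl; lra.
  - pose proof (is_series_plus _ _ _ _ Hx Hy) as Hp.
    apply (series_bound b _ _ Hb) in Hp. apply Hp.
    intro n. unfold plus; simpl.
    replace (qx (a n) / (b * b ^ n) + qy (a n) / (b * b ^ n)) with ((qx (a n) + qy (a n)) / b ^ (S n)).
    apply term_bound; try lra. destruct (a n); simpl; lra.
    simpl. field. split. apply pow_nonzero; lra. lra.
Qed.

Lemma shift_series b (g : nat -> R) l : 1 < b ->
  is_series (fun n => g n / b ^ S n) l ->
  is_series (fun n => g (S n) / b ^ S n) (b * l - g O).
Proof.
  intros Hb Hs.
  assert (Hs2 : is_series (fun n => g n / b ^ S n) (plus (l - g O / b) (g O / b ^ 1))).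
  { replace (plus (l - g O / b) (g O / b ^ 1)) with l. exact Hs. assert (E : (l - g O / b) + g O / b^1 = l) by (field; lra). symmetry; exact E. }
  apply (is_series_incr_1 (fun n => g n / b ^ S n) (l - g O / b)) in Hs2.
  apply (is_series_scal_l b) in Hs2.
  replace (b * l - g O) with (b * (l - g O / b)) by (field; lra).
  apply is_series_ext with (2 := Hs2). intro n. unfold scal; simpl. unfold mult; simpl.
  field. split. apply pow_nonzero; lra. lra.
Qed.

Lemma exp_shift b a z : 1 < b -> expansion b a z ->
  exists z', expansion b (fun n => a (S n)) z' /\ z = Defs.f b (a O) z'.
Proof.
  intros Hb [Hx Hy]. apply is_series_Reals in Hx. apply is_series_Reals in Hy.
  exists (b * fst z - qx (a O), b * snd z - qy (a O)). split.
  - split; apply is_series_Reals; simpl.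
    + apply (shift_series b (fun n => qx (a n))); auto.
    + apply (shift_series b (fun n => qy (a n))); auto.
  - destruct z as [x y]; unfold Defs.f; simpl. f_equal; field; lra.
Qed.
Lemma digit_eq_dec (x y : digit) : {x = y} + {x <> y}.
Proof. decide equality. Qed.
Section Geo.
Variable b : R.
Hypothesis Hb : 3/2 < b.
Let c := 1 / b.
Let e := 1 / (b - 1).

Lemma c_pos : 0 < c. Proof. unfold c; apply Rdiv_lt_0_compat; lra. Qed.
Lemma c_lt1 : c < 1. Proof. unfold c. apply Rmult_lt_reg_r with b. lra. field_simplify; lra. Qed.
Lemma ce : 1 / (b * (b - 1)) = e - c. Proof. unfold e, c. field. lra. Qed.
Lemma ec : e * c = e - c. Proof. unfold e, c. field. lra. Qed.
Lemma e3c : e < 3 * c.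
Proof. unfold e, c. apply Rmult_lt_reg_r with (b * (b-1)). nra. field_simplify; lra. Qed.
Lemma divc u : u / b = u * c. Proof. unfold c. field. lra. Qed.

Definition T (p : R * R) := 0 <= fst p /\ 0 <= snd p /\ fst p + snd p <= e.

Lemma decomp a z : expansion b a z ->
  exists z', S_beta b z' /\ T z' /\ fst z = (fst z' + qx (a O)) * c /\ snd z = (snd z' + qy (a O)) * c.
Proof.
  intros Hz. destruct (exp_shift b a z) as [z' [H1 H2]]; try lra; auto.
  exists z'. split. exists (fun n => a (S n)); auto.
  split. unfold T, e. apply (exp_T b _ _ ltac:(lra) H1).
  subst z. unfold Defs.f; simpl. rewrite !divc. auto.
Qed.

Lemma feq i j u v : Defs.f b i u = Defs.f b j v ->
  fst u + qx i = fst v + qx j /\ snd u + qy i = snd v + qy j.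
Proof.
  unfold Defs.f; intro E. injection E. intros E2 E1.
  split; [apply Rmult_eq_reg_r with (/ b) | apply Rmult_eq_reg_r with (/ b)]; auto;
  apply Rinv_neq_0_compat; lra.
Qed.

Lemma noH z : S_beta b z -> ~ H b z.
Proof.
  intros [a Ha] HH. destruct (decomp a z Ha) as [z' [_ [[T1 [T2 T3]] [X Y]]]].
  unfold H in HH. rewrite ce in HH. fold c in HH.
  pose proof c_pos. pose proof c_lt1. pose proof ec.
  destruct (a O); simpl in X, Y; nra.
Qed.

Definition G (i : digit) (p : R * R) : Prop :=
  match i with
  | D0 => fst p < c /\ snd p < c
  | D1 => snd p < c /\ fst p + snd p > e - c
  | D2 => fst p < c /\ fst p + snd p > e - c
  end.

Lemma H_G i p : H b p -> G i p.
Proof. unfold H; rewrite ce; fold c. destruct i; simpl; lra. Qed.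

Lemma G_inv i p : G i p -> G i (Defs.f b i p).
Proof.
  pose proof c_pos. pose proof c_lt1. pose proof ec.
  destruct i; unfold Defs.f; simpl; rewrite !divc; intros; nra.
Qed.

Lemma G_iter i n w : H b w -> G i (Nat.iter n (Defs.f b i) w).
Proof.
  intro Hw. induction n. apply H_G; auto. simpl. apply G_inv; auto.
Qed.

Lemma G_disj i j k u v : G i u -> T v -> k <> i -> k <> j ->
  fst u + qx j = fst v + qx k -> snd u + qy j = snd v + qy k -> False.
Proof.
  pose proof c_pos. pose proof c_lt1. unfold T.
  destruct i, j, k; simpl; intros; try congruence; lra.
Qed.

Lemma iterH i n w : H b w -> ~ S_beta b (Nat.iter n (Defs.f b i) w).
Proof.
  intro Hw. induction n.
  - intro HS; exact (noH _ HS Hw).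
  - intros [a Ha]. destruct (decomp a _ Ha) as [z' [Sz' [Tz' [X Y]]]].
    simpl in X, Y.
    rewrite divc in X, Y.
    pose proof c_pos.
    assert (X' : fst (Nat.iter n (Defs.f b i) w) + qx i = fst z' + qx (a O)) by
      (apply Rmult_eq_reg_r with c; lra).
    assert (Y' : snd (Nat.iter n (Defs.f b i) w) + qy i = snd z' + qy (a O)) by
      (apply Rmult_eq_reg_r with c; lra).
    destruct (digit_eq_dec (a O) i) as [E|E].
    + rewrite E in X', Y'. apply IHn.
      replace (Nat.iter n (Defs.f b i) w) with z'. auto.
      destruct z'; destruct (Nat.iter n (Defs.f b i) w); simpl in *; f_equal; lra.
    + apply (G_disj i i (a O) _ _ (G_iter i n w Hw) Tz' E E X' Y').
Qed.

Lemma main_geo a z : expansion b a z ->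
  (forall i : digit, Defs.E b i z -> a 0%nat = i) /\
  (forall p : dpair, Cij b p z -> a 0%nat = pfst p \/ a 0%nat = psnd p).
Proof.
  intros Ha. destruct (decomp a z Ha) as [z' [Sz' [Tz' [X Y]]]].
  pose proof c_pos. pose proof c_lt1. pose proof ec. pose proof e3c.
  destruct Tz' as [T1 [T2 T3]].
  split.
  - intros i [[Et | [j [n [Hji [Hn [w [Hw Hz]]]]]]] _].
    + unfold Etilde in Et. rewrite ce in Et. fold c e in Et.
      destruct Et as [Et _].
      destruct i, (a O); simpl in X, Y, Et; auto; exfalso; nra.
    + destruct (digit_eq_dec (a O) i) as [E1|E1]; auto. exfalso.
      set (u := Nat.iter n (Defs.f b i) w) in Hz.
      unfold Defs.f at 1 in Hz. rewrite Hz in X, Y; simpl in X, Y. rewrite divc in X, Y.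
      assert (X' : fst u + qx j = fst z' + qx (a O)) by (apply Rmult_eq_reg_r with c; lra).
      assert (Y' : snd u + qy j = snd z' + qy (a O)) by (apply Rmult_eq_reg_r with c; lra).
      destruct (digit_eq_dec (a O) j) as [E2|E2].
      * rewrite E2 in X', Y'. apply (iterH i n w Hw).
        fold u. replace u with z'. auto.
        destruct z'; destruct u; simpl in *; f_equal; lra.
      * apply (G_disj i j (a O) u z' (G_iter i n w Hw)); auto.
        unfold T; auto.
  - intros p [Ct _]. unfold Ctilde in Ct.
    destruct p; simpl in Ct; rewrite ?ce in Ct; fold c e in Ct;
    destruct (a O); simpl in X, Y |- *; auto; exfalso; nra.
Qed.
End Geo.

Import Defs.
Theorem lemma6p4 (beta bstar : R) (z : R * R) (a : nat -> digit) :
  bstar ^ 3 - 2 * bstar ^ 2 + 2 * bstar = 2 ->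
  3 / 2 < beta <= bstar ->
  S_beta beta z ->
  expansion beta a z ->
  (forall i : digit, E beta i z -> a 0%nat = i) /\
  (forall p : dpair, Cij beta p z -> a 0%nat = pfst p \/ a 0%nat = psnd p).
Proof.
  intros _ [Hb _] _ Ha. apply (main_geo beta Hb a z Ha).
Qed.
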